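(* Let $A$ be as in the context, and assume that (i) no two con-edges for the same cluster belong to the same connected component of the conflict graph $K_A$; (ii) $A[\rho]$ is connected for every cluster $\rho$; (iii) no con-edge for a cluster $\rho$ is a bridge of $A[\rho]$; (iv) $K_A$ is bipartite; (v) $A$ contains no self-loop. Let $e$ be a con-edge of $A$ that crosses no other con-edge of $A$. Then there exists a planar set of spanning trees for $A$ if and only if there exists a planar set $S'$ of spanning trees for $A$ with $e\in S'$.
   Context: Let $C(G,T)$ be an embedded flat clustered graph: $G$ is a planar graph with a fixed planar embedding, $T$ a rooted tree whose leaves are the vertices of $G$ and whose non-root internal nodes (clusters) are all children of the root; a vertex belongs to the cluster that is its parent. For a face $f$ of $G$ let $B_f$ be the clockwise sequence of vertex occurrences on its boundary. A con-edge for a cluster $\alpha$ is a pair of occurrences on the boundary of one face $f$ of two distinct vertices of $\alpha$ lying in different connected components of $G[\alpha]$, drawn inside $f$; two con-edges in the same face cross (have a conflict) if their occurrences alternate along $B_f$. The multigraph of con-edges is obtained by inserting all con-edges into the faces, contracting each connected component of each $G[\alpha]$ into one vertex (belonging to $\alpha$), and deleting the edges of $G$. Throughout, $A$ denotes this multigraph or any multigraph obtained from it by a sequence of operations each of which removes some edges or contracts some edges that cross no other edge (contracting identifies the two end-vertices and deletes the edge). $A[\alpha]$ is the subgraph formed by the con-edges for $\alpha$. The conflict graph $K_A$ has one vertex per con-edge of $A$ and an edge between any two crossing con-edges. A planar set of spanning trees for $A$ is a set $S$ of edges of $A$ such that, for each cluster $\alpha$, the edges of $S$ for $\alpha$ form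 a tree spanning all vertices of $A$ belonging to $\alpha$, and no two edges of $S$ cross. *)

(* Defs.v *)
From mathcomp Require Import all_boot.
Set Implicit Arguments. Unset Strict Implicit. Unset Printing Implicit Defensive.

(* The multigraph of con-edges A (possibly after removals / contractions of
   uncrossed edges).  Vertices and con-edges form finite types; each vertex
   belongs to a cluster; each con-edge is for a cluster, has two end-vertices
   (a multigraph: parallel edges allowed, self-loops representable), and is
   drawn inside a face [cface x] of G joining the occurrences at positions
   [cpos1 x] and [cpos2 x] of the clockwise boundary sequence B_f. *)
Record conGraph := ConGraph {
  cluster : finType;
  cvertex : finType;
  cedge : finType;
  face : finType;
  vclus : cvertex -> cluster;
  eclus : cedge -> cluster;
  src : cedge -> cvertex;
  dst : cedge -> cvertex;
  cface : cedge -> face;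
  cpos1 : cedge -> nat;
  cpos2 : cedge -> nat;
  src_clus : forall x, vclus (src x) = eclus x;
  dst_clus : forall x, vclus (dst x) = eclus x;
  (* every cluster is a non-root internal node, hence owns some vertex *)
  clus_nonempty : forall c, exists v, vclus v = c
}.

Definition alternate (a b c d : nat) : bool :=
  let lo := minn a b in let hi := maxn a b in
  ((lo < c < hi) && ((d < lo) || (hi < d))) ||
  ((lo < d < hi) && ((c < lo) || (hi < c))).

Section Defs.
Variable A : conGraph.

Definition cross : rel (cedge A) := fun x y =>
  (cface x == cface y) && alternate (cpos1 x) (cpos2 x) (cpos1 y) (cpos2 y).

Definition adj (T : {set cedge A}) : rel (cvertex A) := fun u v =>
  [exists x in T, ((src x == u) && (dst x == v)) || ((src x == v) && (dst x == u))].

Definition edges_of (c : cluster A) : {set cedge A} := [set x | eclus x == c].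

Definition connected_on (c : cluster A) (T : {set cedge A}) : Prop :=
  forall u v, vclus u = c -> vclus v = c -> connect (adj T) u v.

Definition is_bridge (T : {set cedge A}) (x : cedge A) : Prop :=
  x \in T /\ ~~ connect (adj (T :\ x)) (src x) (dst x).

(* edge set T (all of whose edges are for c) is a tree spanning the
   vertices of cluster c: connected and acyclic (every edge a bridge) *)
Definition spanning_tree_of (c : cluster A) (T : {set cedge A}) : Prop :=
  connected_on c T /\ forall x, x \in T -> is_bridge T x.

Definition planar_spanning_trees (S : {set cedge A}) : Prop :=
  (forall c, spanning_tree_of c (S :&: edges_of c)) /\
  (forall x y, x \in S -> y \in S -> ~~ cross x y).

Definition hyp_i : Prop :=
  forall x y, x != y -> eclus x = eclus y -> ~~ connect cross x y.
Definition hyp_ii : Prop := forall c, connected_on c (edges_of c).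
Definition hyp_iii : Prop :=
  forall x, ~ is_bridge (edges_of (eclus x)) x.
Definition hyp_iv : Prop :=
  exists col : cedge A -> bool, forall x y, cross x y -> col x != col y.
Definition hyp_v : Prop := forall x : cedge A, src x != dst x.

End Defs.

(* Main.v *)
Require Import Defs.
From mathcomp Require Import all_boot zify.
Set Implicit Arguments. Unset Strict Implicit. Unset Printing Implicit Defensive.

Lemma alt_sym a b c d : alternate a b c d = alternate c d a b.
Proof. rewrite /alternate; apply/idP/idP => H; lia. Qed.

Lemma conn_ind (X : finType) (r : rel X) (R : X -> X -> Prop) a :
  R a a -> (forall y z, R a y -> r y z -> R a z) ->
  forall b, connect r a b -> R a b.
Proof.
move=> Ra Hs b /connectP [p pth ->] {b}.
suff H : forall p x, R a x -> path r x p -> R a (last x p) by exact: H.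
elim=> [|y q IH] x Rx //= /andP [rxy pth']. exact: IH (Hs _ _ Rx rxy) pth'.
Qed.

Section Proofs.
Variable A : conGraph.

Lemma cross_sym (x y : cedge A) : cross x y = cross y x.
Proof. by rewrite /cross eq_sym alt_sym. Qed.

Lemma adj_sym (U : {set cedge A}) : symmetric (adj U).
Proof.
move=> a b; rewrite /adj; apply/existsP/existsP => -[x /andP[xU H]];
  exists x; by rewrite xU /= orbC.
Qed.

Lemma csym (U : {set cedge A}) a b :
  connect (adj U) a b = connect (adj U) b a.
Proof. exact: (sym_connect_sym (adj_sym U)). Qed.

Lemma cmono (U V : {set cedge A}) a b :
  U \subset V -> connect (adj U) a b -> connect (adj V) a b.
Proof.
move=> sUV H.
apply: (@conn_ind _ (adj U) (fun a b => connect (adj V) a b) a (connect0 _ _) _ b H).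
move=> y z ayc /existsP [x /andP [xU Hx]].
apply: connect_trans ayc (connect1 _). apply/existsP; exists x.
by rewrite (subsetP sUV _ xU).
Qed.

Lemma conn0 a b : connect (adj (set0 : {set cedge A})) a b -> a = b.
Proof.
move=> H; apply: (@conn_ind _ _ (fun a b => a = b) a erefl _ b H).
by move=> y z -> /existsP [x]; rewrite inE.
Qed.

Lemma conn_add (U : {set cedge A}) x a b :
  connect (adj (x |: U)) a b ->
  connect (adj U) a b \/
  (connect (adj U) a (src x) /\ connect (adj U) (dst x) b) \/
  (connect (adj U) a (dst x) /\ connect (adj U) (src x) b).
Proof.
move=> H; apply: (@conn_ind _ _ (fun a b => connect (adj U) a b \/
  (connect (adj U) a (src x) /\ connect (adj U) (dst x) b) \/
  (connect (adj U) a (dst x) /\ connect (adj U) (src x) b)) a _ _ b H).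
  by left; apply: connect0.
move=> y z Ry /existsP [g /andP [gxU Hg]].
move: gxU; rewrite in_setU1 => /orP [/eqP gx | gU].
- subst g. case/orP: Hg => /andP [/eqP sy /eqP dz]; subst y z.
  + case: Ry => [ay | [[ay dy] | [ay sy]]].
    * by right; left; split=> //; apply: connect0.
    * by left; apply: connect_trans ay _; rewrite csym.
    * by left.
  + case: Ry => [ay | [[ay dy] | [ay sy]]].
    * by right; right; split=> //; apply: connect0.
    * by left.
    * by left; apply: connect_trans ay _; rewrite csym.
- have yz : connect (adj U) y z.
    by apply: connect1; apply/existsP; exists g; rewrite gU.
  case: Ry => [ay | [[ay dy] | [ay sy]]].
  + by left; exact: connect_trans ay yz.
  + by right; left; split=> //; exact: connect_trans dy yz.
  + by right; right; split=> //; exact: connect_trans sy yz.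
Qed.

Lemma exists_cut (T : {set cedge A}) u v :
  (forall x, x \in T -> is_bridge T x) -> connect (adj T) u v -> u != v ->
  exists2 f, f \in T & ~~ connect (adj (T :\ f)) u v.
Proof.
move=> Hb Tuv nuv.
pose P := fun U : {set cedge A} => (U \subset T) && connect (adj U) u v.
have PT : P T by rewrite /P subxx Tuv.
case: (@arg_minnP _ T P (fun U => #|U|) PT) => U /andP [sUT Uuv] Umin.
have [f fU] : exists f, f \in U.
  case: (set_0Vmem U) => [U0 | [f fU]]; last by exists f.
  by move: Uuv; rewrite U0 => /conn0 /eqP; rewrite (negbTE nuv).
have fT := subsetP sUT _ fU.
exists f => //; apply/negP => Tfuv.
have nUf : ~~ connect (adj (U :\ f)) u v.
  apply/negP => Hc.
  have : P (U :\ f).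
    by rewrite /P Hc andbT; apply: subset_trans sUT; apply: subD1set.
  by move/Umin; rewrite (cardsD1 f U) fU add1n ltnn.
have sUfTf : U :\ f \subset T :\ f by apply: setSD.
move: Uuv; rewrite -(setD1K fU) => /conn_add [H|[[h1 h2]|[h1 h2]]].
- by rewrite H in nUf.
- case: (Hb f fT) => _ /negP; apply.
  rewrite csym in h1; rewrite csym in h2.
  apply: (connect_trans (cmono sUfTf h1)).
  apply: (connect_trans Tfuv). exact: (cmono sUfTf h2).
- case: (Hb f fT) => _ /negP; apply.
  apply: (connect_trans (cmono sUfTf h2)); rewrite csym in Tfuv.
  apply: (connect_trans Tfuv). exact: (cmono sUfTf h1).
Qed.

Lemma exchange c (T : {set cedge A}) e f :
  spanning_tree_of c T -> e \notin T -> f \in T ->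
  connect (adj T) (src e) (dst e) ->
  ~~ connect (adj (T :\ f)) (src e) (dst e) ->
  spanning_tree_of c (e |: (T :\ f)).
Proof.
move=> [Tcon Tbr] eT fT Tuv nTf.
have sub1 : T :\ f \subset e |: (T :\ f) by apply: subsetUr.
have e' : connect (adj (e |: (T :\ f))) (src e) (dst e).
  by apply: connect1; apply/existsP; exists e; rewrite setU11 !eqxx.
have key : connect (adj (e |: (T :\ f))) (src f) (dst f).
  move: Tuv; rewrite -{1}(setD1K fT) => /conn_add [H|[[h1 h2]|[h1 h2]]].
  - by rewrite H in nTf.
  - rewrite csym in h1; rewrite csym in h2.
    apply: connect_trans (cmono sub1 h1) _; apply: connect_trans e' _.
    exact: cmono sub1 h2.
  - apply: connect_trans (cmono sub1 h2) _; rewrite csym in e'.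
    exact: connect_trans e' (cmono sub1 h1).
have key2 : connect (adj (e |: (T :\ f))) (dst f) (src f) by rewrite csym.
split.
- move=> a b ac bc. have := Tcon a b ac bc.
  rewrite -{1}(setD1K fT) => /conn_add [H|[[h1 h2]|[h1 h2]]].
  + exact: cmono sub1 H.
  + exact: connect_trans (cmono sub1 h1) (connect_trans key (cmono sub1 h2)).
  + exact: connect_trans (cmono sub1 h1) (connect_trans key2 (cmono sub1 h2)).
- move=> g gT'; split; first exact: gT'.
  case: (eqVneq g e) => [-> | gne].
  + have sTe : (e |: (T :\ f)) :\ e \subset T :\ f.
      apply/subsetP => z; rewrite !inE => /andP [ze /orP [ze2|//]].
      by rewrite ze2 in ze.
    apply/negP => H; move/negP: nTf; apply; exact: cmono sTe H.
  + move: (gT'); rewrite in_setU1 (negbTE gne) /= => gTf.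
    have gT : g \in T by move: gTf; rewrite in_setD1 => /andP [].
    have sub2 : (e |: (T :\ f)) :\ g \subset e |: ((T :\ f) :\ g).
      apply/subsetP=> z; rewrite !inE.
      by case/andP=> zg /orP [->//| zfT]; rewrite zg zfT orbT.
    have sub3 : (T :\ f) :\ g \subset T :\ f by apply: subD1set.
    have gedge : connect (adj (T :\ f)) (src g) (dst g).
      by apply: connect1; apply/existsP; exists g; rewrite gTf !eqxx.
    have gedge' : connect (adj (T :\ f)) (dst g) (src g) by rewrite csym.
    apply/negP => H; move: (cmono sub2 H) => /conn_add [H2|[[h1 h2]|[h1 h2]]].
    * case: (Tbr g gT) => _ /negP; apply; apply: cmono H2.
      apply/subsetP=> z; rewrite !inE.
      by case/and3P => -> _ ->.
    * move/negP: nTf; apply. rewrite csym in h1; rewrite csym in h2.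
      exact: connect_trans (cmono sub3 h1) (connect_trans gedge (cmono sub3 h2)).
    * move/negP: nTf; apply.
      exact: connect_trans (cmono sub3 h2) (connect_trans gedge' (cmono sub3 h1)).
Qed.

End Proofs.

Theorem lemma8 (A : conGraph) (e : cedge A) :
  hyp_i A -> hyp_ii A -> hyp_iii A -> hyp_iv A -> hyp_v A ->
  (forall y, ~~ cross e y) ->
  ((exists S : {set cedge A}, planar_spanning_trees S) <->
   (exists S' : {set cedge A}, planar_spanning_trees S' /\ e \in S')).
Proof.
move=> _ _ _ _ hv ne; split; last by case=> S [HS _]; exists S.
case=> S [Hsp Hcr].
case eS: (e \in S); first by exists S.
have [Tcon Tbr] := Hsp (eclus e).
have uc : vclus (src e) = eclus e by rewrite src_clus.
have vc : vclus (dst e) = eclus e by rewrite dst_clus.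
have Tuv := Tcon _ _ uc vc.
have [f fT nTf] := exists_cut Tbr Tuv (hv e).
have fS : f \in S by move: fT; rewrite inE => /andP [].
have fc : eclus f = eclus e by move: fT; rewrite /edges_of !inE => /andP [_ /eqP].
exists (e |: (S :\ f)); split; last by rewrite setU11.
split.
- move=> d. case: (eqVneq d (eclus e)) => [-> | dc].
  + have -> : (e |: (S :\ f)) :&: edges_of (eclus e) =
              e |: ((S :&: edges_of (eclus e)) :\ f).
      apply/setP=> z; rewrite /edges_of !inE.
      case: (eqVneq z e) => [->|_] /=; first by rewrite eqxx.
      by rewrite andbA.
    apply: exchange => //.
    by rewrite inE eS.
  + have -> : (e |: (S :\ f)) :&: edges_of d = S :&: edges_of d.
      apply/setP=> z; rewrite /edges_of !inE.
      case: (eqVneq z e) => [->|ze] /=.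
        by rewrite eS eq_sym (negbTE dc).
      case: (eqVneq z f) => [->|zf] //=.
      by rewrite fS fc eq_sym (negbTE dc).
    exact: Hsp.
- move=> x y; rewrite !in_setU1 => /orP [/eqP -> | xS] /orP [/eqP -> | yS].
  + exact: ne.
  + exact: ne.
  + by rewrite cross_sym; exact: ne.
  + apply: Hcr.
    * by move: xS; rewrite in_setD1 => /andP [_ ->].
    * by move: yS; rewrite in_setD1 => /andP [_ ->].
Qed.
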